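(* Let $G$ be a connected graph with $|V(G)|\ge 3$ and $L(G)=2l(G)$. For any maximum matchings $F_L,F_l$ of $G$ with $\nu(G\setminus F_L)=L(G)$ and $\nu(G\setminus F_l)=l(G)$, every connected component of the subgraph with edge set $F_L\triangle F_l$ (and vertex set $V(F_L\triangle F_l)$) is a path of length $2$.
   Context: Graphs are finite, undirected, without loops or multiple edges. $\nu(G)$ denotes the maximum size of a matching of $G$; a matching is maximum if it has $\nu(G)$ edges. For $F\subseteq E(G)$, $G\setminus F$ is the graph with vertex set $V(G)$ and edge set $E(G)\setminus F$, and $V(F)$ is the set of vertices incident to some edge of $F$. $\triangle$ denotes symmetric difference. Define $L(G)=\max\{\nu(G\setminus F): F \text{ a maximum matching of } G\}$ and $l(G)=\min\{\nu(G\setminus F): F \text{ a maximum matching of } G\}$. *)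

(* Defs.v *)
(* A finite simple graph on vertex type T is given by its
   edge set E : {set {set T}}, every edge being a 2-element set of vertices. *)
From HB Require Import structures.
From mathcomp Require Import all_boot.
Set Implicit Arguments. Unset Strict Implicit. Unset Printing Implicit Defensive.

Section Graphs.
Variable T : finType.

Definition simple_graph (E : {set {set T}}) : Prop :=
  forall e, e \in E -> #|e| = 2.

Definition adj (E : {set {set T}}) : rel T := fun x y => [set x; y] \in E.

(* connected graph (vertex set = all of T) *)
Definition connected_graph (E : {set {set T}}) : Prop :=
  forall x y : T, connect (adj E) x y.

Definition is_matching (M : {set {set T}}) : bool :=
  [forall e in M, forall f in M, (e != f) ==> [disjoint e & f]].

Definition matching_of (E M : {set {set T}}) : bool :=
  (M \subset E) && is_matching M.

Definition nu (E : {set {set T}}) : nat :=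
  \max_(M : {set {set T}} | matching_of E M) #|M|.

Definition max_matching (E F : {set {set T}}) : bool :=
  matching_of E F && (#|F| == nu E).

Definition bigL (E : {set {set T}}) : nat :=
  \max_(F : {set {set T}} | max_matching E F) nu (E :\: F).

(* l(G) = min { nu(G \ F) : F maximum matching of G }
   (the default value #|E| is an upper bound of every nu(G \ F), and the set
   of maximum matchings is nonempty, so this is the true minimum) *)
Definition smalll (E : {set {set T}}) : nat :=
  \big[minn/#|E|]_(F : {set {set T}} | max_matching E F) nu (E :\: F).

Definition symdiff (A B : {set {set T}}) : {set {set T}} := (A :\: B) :|: (B :\: A).

Definition Vof (F : {set {set T}}) : {set T} := \bigcup_(e in F) e.

Definition components_are_P3 (D : {set {set T}}) : Prop :=
  forall x, x \in Vof D ->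
    exists a b c : T,
      [/\ a != b, b != c, a != c,
          [set y | connect (adj D) x y] = [set a; b; c] &
          [set e in D | e \subset [set y | connect (adj D) x y]]
            = [set [set a; b]; [set b; c]]].

End Graphs.

(* Main.v *)
Require Import Defs.
From HB Require Import structures.
From mathcomp Require Import all_boot.
From Stdlib Require Import Lia.
Set Implicit Arguments. Unset Strict Implicit. Unset Printing Implicit Defensive.

Lemma meetP (T : finType) (e f : {set T}) :
  reflect (exists2 x, x \in e & x \in f) (~~ [disjoint e & f]).
Proof.
apply: (iffP idP).
  move=> H; case: (pickP (fun x => (x \in e) && (x \in f))) => [x /andP[]|H0]; first by exists x.
  by case/negP: H; apply/pred0P => x /=; move: (H0 x).
by case=> x xe xf; apply/negP => /disjointFr /(_ xe); rewrite xf.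
Qed.

Lemma match_eq (T : finType) (M : {set {set T}}) e f x :
  is_matching M -> e \in M -> f \in M -> x \in e -> x \in f -> e = f.
Proof.
move=> /forallP/(_ e)/implyP H eM fM xe xf.
move: (H eM) => /forallP/(_ f)/implyP/(_ fM)/implyP H2.
apply/eqP; apply/negPn/negP => /H2 D.
by move: (disjointFr D xe); rewrite xf.
Qed.

Lemma matchingI (T : finType) (M : {set {set T}}) :
  (forall e f x, e \in M -> f \in M -> x \in e -> x \in f -> e = f) -> is_matching M.
Proof.
move=> H; apply/forallP => e; apply/implyP => eM; apply/forallP => f; apply/implyP => fM.
apply/implyP => nef; apply/negPn/negP => /meetP [x xe xf].
by move/eqP: nef; apply; apply: H xe xf.
Qed.

Lemma nu_ge (T : finType) (E M : {set {set T}}) : matching_of E M -> #|M| <= nu E.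
Proof. by move=> H; rewrite /nu; exact: (@leq_bigmax_cond _ (fun M => matching_of E M) (fun M : {set {set T}} => #|M|) M H). Qed.

Lemma nu_wit (T : finType) (E : {set {set T}}) : exists2 M, matching_of E M & #|M| = nu E.
Proof.
have P0 : matching_of E set0.
  by rewrite /matching_of sub0set; apply: matchingI => e f x; rewrite inE.
case: (@eq_bigmax_cond _ (fun M => matching_of E M) (fun M : {set {set T}} => #|M|)).
  by apply/card_gt0P; exists set0.
by move=> M HM HE; exists M => //; rewrite /nu HE.
Qed.

Lemma two_set (T : finType) (e : {set T}) b : #|e| = 2 -> b \in e ->
  exists a, a != b /\ e = [set a; b].
Proof.
move/eqP/cards2P => [x [y [xy ->]]]; rewrite !inE => /orP[]/eqP->.
  by exists y; split; [rewrite eq_sym | rewrite setUC].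
by exists x.
Qed.

Lemma match_add (T : finType) (X : {set {set T}}) (e : {set T}) : is_matching X ->
  (forall g x, g \in X -> x \in e -> x \in g -> e = g) -> is_matching (e |: X).
Proof.
move=> Xm H; apply: matchingI => g h x; rewrite !inE.
case/orP=> [/eqP->|gX]; case/orP=> [/eqP->|hX] xg xh //.
- exact: H hX xg xh.
- exact: esym (H g x gX xh xg).
- exact: match_eq Xm gX hX xg xh.
Qed.

Lemma match_sub (T : finType) (X N : {set {set T}}) :
  N \subset X -> is_matching X -> is_matching N.
Proof.
move=> /subsetP s Xm; apply: matchingI => e f x eN fN.
exact: match_eq Xm (s _ eN) (s _ fN).
Qed.

Lemma arith a b c l : a + b = 2 * l -> b <= l -> a <= c -> c <= l ->
  [/\ a = c, b = l & c = l].
Proof.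
move=> h1 /leP h2 /leP h3 /leP h4; rewrite -plusE -multE in h1.
split; lia.
Qed.

Lemma ex_nb (T : finType) (E X Y : {set {set T}}) (e : {set T}) :
  is_matching X -> X \subset E -> #|X| = nu E ->
  is_matching Y -> Y \subset E -> e \in Y -> e \notin X ->
  exists2 f, f \in X :\: Y & ~~ [disjoint e & f].
Proof.
move=> Xm XE cX Ym YE eY eX.
case: (pickP [pred f | (f \in X :\: Y) && ~~ [disjoint e & f]]) => [f /andP[]|H].
  by exists f.
have : #|e |: X| <= nu E.
  apply: nu_ge; apply/andP; split.
    by rewrite subUset XE sub1set (subsetP YE).
  apply: (@match_add T X e Xm) => g x gX xe xg.
  case gY: (g \in Y); first exact: match_eq Ym eY gY xe xg.
  move: (H g); rewrite /= !inE gY gX /=.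
  by have -> : ~~ [disjoint e & g] by apply/meetP; exists x.
by rewrite cardsU1 eX cX ltnn.
Qed.

Theorem claim2 (T : finType) (E : {set {set T}})
  (hsimple : simple_graph E) (hconn : connected_graph E)
  (hV : 3 <= #|T|) (hL : bigL E = 2 * smalll E)
  (FL Fl : {set {set T}})
  (hFL : max_matching E FL) (hFLv : nu (E :\: FL) = bigL E)
  (hFl : max_matching E Fl) (hFlv : nu (E :\: Fl) = smalll E) :
  components_are_P3 (symdiff FL Fl).
Proof.
move: hFL hFl => /andP[/andP[FLE FLm] /eqP cFL] /andP[/andP[FlE Flm] /eqP cFl].
set l := smalll E in hL hFlv.
set A := FL :\: Fl. set B := Fl :\: FL.
have [M /andP[ME Mm] cM] := nu_wit (E :\: FL).
rewrite hFLv hL in cM.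
have Bl N : matching_of (E :\: Fl) N -> #|N| <= l by move=> H; rewrite -hFlv; exact: nu_ge.
have MFl : #|M :\: Fl| <= l.
  apply: Bl; apply/andP; split; last by apply: match_sub Mm; apply: subsetDl.
  apply/subsetP => g; rewrite !inE => /andP[gFl gM].
  by move/subsetP: ME => /(_ g gM); rewrite !inE => /andP[_ ->]; rewrite gFl.
have Al : #|A| <= l.
  apply: Bl; apply/andP; split; last by apply: match_sub FLm; apply: subsetDl.
  apply/subsetP => g; rewrite !inE => /andP[gFl gM].
  by rewrite gFl (subsetP FLE).
have AB : #|A| = #|B|.
  have h1 := cardsID Fl FL. have h2 := cardsID FL Fl.
  rewrite setIC cFl -cFL -h1 in h2.
  by apply/eqP; rewrite -(eqn_add2l #|FL :&: Fl|) h2.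
have MB : M :&: Fl \subset B.
  apply/subsetP => g; rewrite !inE => /andP[gM gFl]; rewrite gFl andbT.
  by move/subsetP: ME => /(_ g gM); rewrite !inE => /andP[].
have [q1 q2 q3] := arith (etrans (cardsID Fl M) cM) MFl (subset_leq_card MB) (leq_trans (eq_leq (esym AB)) Al).
have BM : B \subset M.
  have := subset_leqif_cards MB; rewrite q1 => -[_]; rewrite eqxx.
  move/esym/eqP => <-; apply: subsetIl.
have MFL g : g \in M -> g \notin FL.
  by move=> gM; move/subsetP: ME => /(_ g gM); rewrite !inE => /andP[].
have noA e : e \in A -> ~ (e \subset Vof B).
  move=> eA sub.
  have eFL : e \in FL by move: eA; rewrite !inE => /andP[].
  have eFl : e \notin Fl by move: eA; rewrite !inE => /andP[].
  have : #|e |: (M :\: Fl)| <= l.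
    apply: Bl; apply/andP; split.
      rewrite subUset sub1set !inE eFl (subsetP FLE) //=.
      apply/subsetP => g; rewrite !inE => /andP[gFl gM].
      by move/subsetP: ME => /(_ g gM); rewrite !inE => /andP[_ ->]; rewrite gFl.
    apply: (@match_add T _ e (match_sub (subsetDl M Fl) Mm)) => g x.
    rewrite !inE => /andP[gFl gM] xe xg.
    move/subsetP: sub => /(_ x xe) /bigcupP [b bB xb].
    have bM := subsetP BM b bB.
    have gb := match_eq Mm gM bM xg xb.
    by move: bB gFl; rewrite gb !inE => /andP[_ ->].
  rewrite cardsU1 q2 !inE eFl /=.
  case eM: (e \in M); last by rewrite ltnn.
  by move: (MFL e eM); rewrite eFL.
have exB e : e \in A -> exists2 f, f \in B & ~~ [disjoint e & f].
  move=> eA; move: (eA); rewrite !inE => /andP[eFl eFL].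
  exact: (ex_nb Flm FlE cFl FLm FLE eFL eFl).
have exA f : f \in B -> exists2 e, e \in A & ~~ [disjoint f & e].
  move=> fB; move: (fB); rewrite !inE => /andP[fFL fFl].
  exact: (ex_nb FLm FLE cFL Flm FlE fFl fFL).
have uniqB e f1 f2 : e \in A -> f1 \in B -> f2 \in B ->
    ~~ [disjoint e & f1] -> ~~ [disjoint e & f2] -> f1 = f2.
  move=> eA f1B f2B /meetP[z1 z1e z1f] /meetP[z2 z2e z2f].
  have f1Fl : f1 \in Fl by move: f1B; rewrite !inE => /andP[].
  have f2Fl : f2 \in Fl by move: f2B; rewrite !inE => /andP[].
  case: (eqVneq z1 z2) => [ez|nz].
    by apply: (match_eq Flm f1Fl f2Fl z1f); rewrite ez.
  exfalso; apply: (noA e eA).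
  have eFL : e \in FL by move: eA; rewrite !inE => /andP[].
  have [a [az2 He]] := two_set (hsimple e (subsetP FLE e eFL)) z2e.
  apply/subsetP => y; rewrite He !inE => /orP[]/eqP->; apply/bigcupP.
    exists f1 => //; move: z1e; rewrite He !inE => /orP[/eqP<-//|].
    by rewrite (negbTE nz).
  by exists f2.
pose m (e f : {set T}) := nat_of_bool (~~ [disjoint e & f]).
have S1 e : e \in A -> \sum_(f in B) m e f = 1.
  move=> eA; have [f0 f0B f0m] := exB e eA.
  rewrite (bigD1 f0) //= /m f0m big1 //= => f /andP[fB nf].
  apply/eqP; rewrite eqb0; apply/negP => mf.
  by move/eqP: nf; apply; apply: uniqB eA fB f0B mf f0m.
have Ssum : \sum_(f in B) \sum_(e in A) m e f = #|B|.
  rewrite -exchange_big /= -AB -sum1_card; apply: eq_bigr => e eA; exact: S1.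
have S2 f : f \in B -> 1 <= \sum_(e in A) m e f.
  move=> fB; have [e0 e0A e0m] := exA f fB.
  rewrite (bigD1 e0) //= /m disjoint_sym e0m; exact: leq_addr.
have S3 : \sum_(f in B) (\sum_(e in A) m e f - 1) = 0.
  by rewrite sumnB // Ssum sum1_card subnn.
have S4 f : f \in B -> \sum_(e in A) m e f <= 1.
  move=> fB; move/eqP: S3; rewrite sum_nat_eq0 => /forallP/(_ f)/implyP/(_ fB).
  by rewrite subn_eq0.
have uniqA f e1 e2 : f \in B -> e1 \in A -> e2 \in A ->
    ~~ [disjoint e1 & f] -> ~~ [disjoint e2 & f] -> e1 = e2.
  move=> fB e1A e2A m1 m2; apply/eqP; apply/negP => /negP ne.
  have := S4 f fB; rewrite (bigD1 e1) //= (bigD1 e2) /=; last by rewrite e2A eq_sym.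
  by rewrite /m m1 m2.
have inD g : (g \in symdiff FL Fl) = (g \in A) || (g \in B) by rewrite /symdiff inE.
have DE g : g \in symdiff FL Fl -> g \in E.
  rewrite inD !inE => /orP[]/andP[_ h]; [exact: subsetP FLE g h | exact: subsetP FlE g h].
have symadj : symmetric (adj (symdiff FL Fl)) by move=> y z; rewrite /adj setUC.
have key e f x : e \in A -> f \in B -> ~~ [disjoint e & f] -> x \in e :|: f ->
    exists a b c : T,
      [/\ a != b, b != c, a != c,
          [set y | connect (adj (symdiff FL Fl)) x y] = [set a; b; c] &
          [set g in symdiff FL Fl | g \subset [set y | connect (adj (symdiff FL Fl)) x y]]
            = [set [set a; b]; [set b; c]]].
  move=> eA fB mef xS.
  have eFL : e \in FL by move: eA; rewrite !inE => /andP[].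
  have eFl : e \notin Fl by move: eA; rewrite !inE => /andP[].
  have fFl : f \in Fl by move: fB; rewrite !inE => /andP[].
  have eD : e \in symdiff FL Fl by rewrite inD eA.
  have fD : f \in symdiff FL Fl by rewrite inD fB orbT.
  have gS g : g \in symdiff FL Fl -> ~~ [disjoint g & e :|: f] -> g = e \/ g = f.
    rewrite inD => /orP[] gX /meetP[y yg]; rewrite inE => /orP[] yS.
    - left; have gFL : g \in FL by move: gX; rewrite !inE => /andP[].
      exact: match_eq FLm gFL eFL yg yS.
    - left; apply: (uniqA f g e fB gX eA _ mef); apply/meetP; by exists y.
    - right; apply: (uniqB e g f eA gX fB _ mef); apply/meetP; by exists y.
    - right; have gFl : g \in Fl by move: gX; rewrite !inE => /andP[].
      exact: match_eq Flm gFl fFl yg yS.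
  have clS : closed (adj (symdiff FL Fl)) (e :|: f).
    apply: intro_closed; first exact: sym_connect_sym.
    move=> y z ayz yS.
    have H : ~~ [disjoint [set y; z] & e :|: f] by apply/meetP; exists y => //; exact: set21.
    by case: (gS _ ayz H) => h; rewrite inE -h set22 ?orbT.
  have [b be bf] := meetP _ _ mef.
  have [a [ab He]] := two_set (hsimple e (DE e eD)) be.
  have [c [cb Hf]] := two_set (hsimple f (DE f fD)) bf.
  have ac : a != c by apply/eqP => ac; move: eFl; rewrite He ac -Hf fFl.
  set R := adj (symdiff FL Fl).
  have Rab : R a b by rewrite /R /adj -He.
  have Rcb : R c b by rewrite /R /adj -Hf.
  have cS : connect_sym R := sym_connect_sym symadj.
  have conb y : y \in e :|: f -> connect R y b.
    rewrite He Hf !inE => /orP[/orP[]|/orP[]] /eqP->;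
      by [apply: connect1 | apply: connect0].
  have comp : [set y | connect R x y] = e :|: f.
    apply/setP => y; rewrite inE; apply/idP/idP => [/(closed_connect clS) <- //|yS].
    apply: connect_trans (conb x xS) _; rewrite cS; exact: conb.
  exists a, b, c; split => //; first by rewrite eq_sym.
    rewrite comp He Hf; apply/setP => y; rewrite !inE.
    by case: (y == a); case: (y == b); case: (y == c).
  apply/setP => g; rewrite inE comp in_set2.
  apply/idP/idP => [/andP[gD gsub]|/orP[]/eqP->].
  - have [z zg] : exists z, z \in g.
      by apply/set0Pn; rewrite -card_gt0 (hsimple g (DE g gD)).
    have H : ~~ [disjoint g & e :|: f] by apply/meetP; exists z => //; exact: (subsetP gsub).
    case: (gS g gD H) => ->; first by rewrite He eqxx.
    by rewrite Hf setUC eqxx orbT.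
  - by rewrite -He eD /=; apply/subsetP => y ye; rewrite inE ye.
  - have -> : [set b; c] = f by rewrite Hf setUC.
    by rewrite fD /=; apply/subsetP => y ye; rewrite inE ye orbT.
move=> x /bigcupP [g gD xg].
move: (gD); rewrite inD => /orP[] gX.
  have [f fB mf] := exB g gX.
  by apply: (key g f x gX fB mf); rewrite inE xg.
have [e eA me] := exA g gX.
apply: (key e g x eA gX); last by rewrite inE xg orbT.
by rewrite disjoint_sym.
Qed.
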